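(* Let $\epsilon>0$ and let $X$ be $\mathbb{R}^3$ equipped with the metric (in polar coordinates $r\ge0$, $\theta\in S^2$) $$g_{\epsilon,3}=dr^2+\Big(\tfrac12 r^{1+\epsilon}\Big)^2 g_{S^2},$$ with vertex $V$ at $r=0$, and with the induced length distance. Then there exists $\eta>0$ such that for any $x,y\in B_\eta(V)$, the vertex $V$ is not an interior point of any geodesic from $x$ to $y$.
   Context: $g_{S^2}$ is the round metric on the unit sphere $S^2$, and $B_\eta(V)$ is the open metric ball of radius $\eta$ about $V$, i.e. $\{r<\eta\}$. *)

(* Defs.v *)
From Stdlib Require Import Reals Lra.
From Coquelicot Require Import Coquelicot.
Open Scope R_scope.

Definition pt := (R * R * R)%type.
Definition px (p : pt) : R := fst (fst p).
Definition py (p : pt) : R := snd (fst p).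
Definition pz (p : pt) : R := snd p.
Definition dot (p q : pt) : R := px p * px q + py p * py q + pz p * pz q.
Definition enorm (p : pt) : R := sqrt (dot p p).
Definition origin : pt := (0, 0, 0).

(* The squared length of the tangent vector v at the point x for
   g_{eps,3} = dr^2 + (1/2 r^(1+eps))^2 g_{S^2}, written in Cartesian coordinates:
   for r = |x| > 0, dr(v) = x.v / r and r^2 g_{S^2}(v,v) = |v|^2 - dr(v)^2,
   so g(v,v) = dr(v)^2 + ((1/2 r^(1+eps)) / r)^2 (|v|^2 - dr(v)^2).
   At the vertex (degenerate point, measure-zero for curves) we set it to 0. *)
Definition metric_sq (eps : R) (x v : pt) : R :=
  let r := enorm x in
  if Req_EM_T r 0 then 0 else
  let vr := dot x v / r in
  vr ^ 2 + (/ 2 * Rpower r (1 + eps) / r) ^ 2 * (dot v v - vr ^ 2).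

Definition C1 (f : R -> R) : Prop :=
  forall t, ex_derive f t /\ continuous (Derive f) t.

Definition velocity (g : R -> pt) (t : R) : pt :=
  (Derive (fun s => px (g s)) t, Derive (fun s => py (g s)) t,
   Derive (fun s => pz (g s)) t).

Definition speed (eps : R) (g : R -> pt) (t : R) : R :=
  sqrt (metric_sq eps (g t) (velocity g t)).

Definition C1_piece (c : R -> pt) (a b : R) (g : R -> pt) : Prop :=
  C1 (fun t => px (g t)) /\ C1 (fun t => py (g t)) /\ C1 (fun t => pz (g t)) /\
  (forall t, a <= t <= b -> g t = c t).

Fixpoint psum (f : nat -> R) (n : nat) : R :=
  match n with O => 0 | S m => psum f m + f m end.

Definition curve_length_is (eps : R) (c : R -> pt) (x y : pt) (L : R) : Prop :=
  c 0 = x /\ c 1 = y /\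
  exists (n : nat) (p : nat -> R) (g : nat -> R -> pt),
    p 0%nat = 0 /\ p n = 1 /\
    (forall i, (i < n)%nat -> p i < p (S i)) /\
    (forall i, (i < n)%nat ->
        C1_piece c (p i) (p (S i)) (g i) /\
        ex_RInt (speed eps (g i)) (p i) (p (S i))) /\
    L = psum (fun i => RInt (speed eps (g i)) (p i) (p (S i))) n.

Definition ldist (eps : R) (x y : pt) : R :=
  real (Glb_Rbar (fun L => exists c, curve_length_is eps c x y L)).

(* A (minimizing) geodesic from x to y: an isometric embedding of [0, d(x,y)]. *)
Definition geodesic (eps : R) (x y : pt) (gam : R -> pt) : Prop :=
  gam 0 = x /\ gam (ldist eps x y) = y /\
  forall s t, 0 <= s <= ldist eps x y -> 0 <= t <= ldist eps x y ->
    ldist eps (gam s) (gam t) = Rabs (s - t).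

(* Main.v *)
Require Import Defs.
From Stdlib Require Import Reals Lra Psatz.
From Coquelicot Require Import Coquelicot.
Require Import Defs.
Open Scope R_scope.

Lemma dot_ge0 P : 0 <= dot P P.
Proof. unfold dot; nra. Qed.

Lemma cont_mult (f g : R -> R) x : continuous f x -> continuous g x -> continuous (fun y => f y * g y) x.
Proof. intros; apply (continuous_mult f g x); auto. Qed.
Lemma cont_plus (f g : R -> R) x : continuous f x -> continuous g x -> continuous (fun y => f y + g y) x.
Proof. intros; apply (continuous_plus f g x); auto. Qed.

Lemma key_ineq eps P V d : 0 < d ->
  Rabs (dot P V / sqrt (dot P P + d * d)) <= sqrt (metric_sq eps P V).
Proof.
  intros Hd. unfold metric_sq.
  assert (HPP := dot_ge0 P). assert (HVV := dot_ge0 V).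
  assert (CS : dot P V * dot P V <= dot P P * dot V V).
  { unfold dot. set (a1 := px P); set (a2 := py P); set (a3 := pz P);
    set (b1 := px V); set (b2 := py V); set (b3 := pz V).
    assert (0 <= (a1*b2-a2*b1)^2 + (a1*b3-a3*b1)^2 + (a2*b3-a3*b2)^2) by
      (repeat apply Rplus_le_le_0_compat; apply pow2_ge_0).
    nra. }
  destruct (Req_EM_T (enorm P) 0) as [E|E].
  - unfold enorm in E. assert (E' : dot P P = 0) by (apply sqrt_eq_0; auto).
    assert (dot P V = 0).
    { assert (dot P V * dot P V <= 0) by nra. nra. }
    rewrite H, sqrt_0. unfold Rdiv; rewrite Rmult_0_l, Rabs_R0. lra.
  - set (r := enorm P) in *.
    assert (Hr : 0 < r) by (assert (0 <= r) by apply sqrt_pos; lra).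
    assert (Hr2 : r * r = dot P P) by (unfold r, enorm; apply sqrt_sqrt; auto).
    set (k := (/ 2 * Rpower r (1 + eps) / r) ^ 2).
    assert (Hk : 0 <= k) by (unfold k; apply pow2_ge_0).
    set (vr := dot P V / r).
    assert (Hvr : vr ^ 2 <= dot V V).
    { unfold vr. unfold Rdiv. replace ((dot P V * / r)^2) with (dot P V * dot P V / (r*r)) by (field; lra).
      apply Rmult_le_reg_r with (r*r); [nra|]. unfold Rdiv; rewrite Rmult_assoc, Rinv_l by nra. nra. }
    assert (M : vr ^ 2 <= vr ^ 2 + k * (dot V V - vr ^ 2)) by nra.
    apply Rle_trans with (sqrt (vr ^ 2)); [|apply sqrt_le_1; nra].
    rewrite <- (pow2_abs vr).
    rewrite sqrt_pow2 by apply Rabs_pos.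
    assert (Hs : 0 < sqrt (dot P P + d * d)) by (apply sqrt_lt_R0; nra).
    unfold vr. rewrite (Rabs_div _ (sqrt _)) by lra. rewrite (Rabs_div _ r) by lra.
    rewrite (Rabs_pos_eq r) by lra. rewrite (Rabs_pos_eq (sqrt _)) by apply sqrt_pos.
    apply Rmult_le_compat_l; [apply Rabs_pos|].
    apply Rinv_le_contravar; [lra|].
    unfold r, enorm. apply sqrt_le_1; nra.
Qed.

Lemma piece_delta (eps : R) (g : R -> pt) (a b d : R) : a < b -> 0 < d ->
  C1 (fun t => px (g t)) -> C1 (fun t => py (g t)) -> C1 (fun t => pz (g t)) ->
  ex_RInt (speed eps g) a b ->
  Rabs (sqrt (dot (g b) (g b) + d * d) - sqrt (dot (g a) (g a) + d * d)) <= RInt (speed eps g) a b.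
Proof.
  intros Hab Hd Cx Cy Cz Hsp.
  set (h := fun s => sqrt (dot (g s) (g s) + d * d)).
  set (dh := fun s => dot (g s) (velocity g s) / sqrt (dot (g s) (g s) + d * d)).
  assert (Hpos : forall s, 0 < dot (g s) (g s) + d * d) by (intros; pose proof (dot_ge0 (g s)); nra).
  assert (Hder : forall s, is_derive h s (dh s)).
  { intros s. destruct (Cx s) as [Ex _]. destruct (Cy s) as [Ey _]. destruct (Cz s) as [Ez _].
    unfold h, dh, dot, velocity. specialize (Hpos s). unfold dot in Hpos.
    change (px (Derive (fun s0 => px (g s0)) s, Derive (fun s0 => py (g s0)) s, Derive (fun s0 => pz (g s0)) s)) with (Derive (fun s0 => px (g s0)) s).
    change (py (Derive (fun s0 => px (g s0)) s, Derive (fun s0 => py (g s0)) s, Derive (fun s0 => pz (g s0)) s)) with (Derive (fun s0 => py (g s0)) s).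
    change (pz (Derive (fun s0 => px (g s0)) s, Derive (fun s0 => py (g s0)) s, Derive (fun s0 => pz (g s0)) s)) with (Derive (fun s0 => pz (g s0)) s).
    set (fx := fun s0 => px (g s0)) in *. set (fy := fun s0 => py (g s0)) in *. set (fz := fun s0 => pz (g s0)) in *.
    change (is_derive (fun s0 => sqrt (fx s0 * fx s0 + fy s0 * fy s0 + fz s0 * fz s0 + d * d)) s
      ((fx s * Derive fx s + fy s * Derive fy s + fz s * Derive fz s) / sqrt (fx s * fx s + fy s * fy s + fz s * fz s + d * d))).
    auto_derive.
    - repeat split; auto.
    - assert (0 < sqrt (px (g s) * px (g s) + py (g s) * py (g s) + pz (g s) * pz (g s) + d * d)) by (apply sqrt_lt_R0; auto).
      change (fun x => fx x) with fx. change (fun x => fy x) with fy. change (fun x => fz x) with fz. field. apply Rgt_not_eq, sqrt_lt_R0; exact Hpos. }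
  assert (Hcont : forall s, continuous dh s).
  { intros s. destruct (Cx s) as [Ex Dx]. destruct (Cy s) as [Ey Dy]. destruct (Cz s) as [Ez Dz].
    apply ex_derive_continuous in Ex. apply ex_derive_continuous in Ey. apply ex_derive_continuous in Ez.
    unfold dh, dot, velocity, Rdiv; simpl.
    apply cont_mult.
    - repeat apply cont_plus; apply cont_mult; auto.
    - apply continuous_Rinv_comp.
      + apply continuous_sqrt_comp. apply cont_plus; [|apply continuous_const].
        repeat apply cont_plus; apply cont_mult; auto.
      + pose proof (Hpos s). unfold dot in H. apply Rgt_not_eq, sqrt_lt_R0; auto. }
  assert (HI : is_RInt dh a b (h b - h a)).
  { apply (is_RInt_derive h dh); intros; auto. }
  assert (Ed : ex_RInt dh a b) by (exists (h b - h a); auto).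
  assert (Rd : RInt dh a b = h b - h a) by (apply is_RInt_unique; auto).
  assert (B1 : forall s, dh s <= speed eps g s /\ - dh s <= speed eps g s).
  { intros s. pose proof (key_ineq eps (g s) (velocity g s) d Hd). unfold speed, dh.
    split; eapply Rle_trans; try apply H; [apply Rle_abs| rewrite <- Rabs_Ropp; apply Rle_abs]. }
  apply Rabs_le; split.
  - assert (RInt (fun s => - dh s) a b <= RInt (speed eps g) a b).
    { apply RInt_le; auto. lra. exact (ex_RInt_opp dh a b Ed). intros; apply B1. }
    assert (E2 : RInt (fun s => - dh s) a b = - RInt dh a b) by exact (RInt_opp dh a b Ed).
    rewrite E2, Rd in H. unfold h in *. lra.
  - assert (RInt dh a b <= RInt (speed eps g) a b).
    { apply RInt_le; auto. lra. intros; apply B1. }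
    unfold h in *. lra.
Qed.

Lemma sqrt_close A d : 0 <= A -> 0 < d -> sqrt A <= sqrt (A + d * d) <= sqrt A + d.
Proof.
  intros HA Hd. split.
  - apply sqrt_le_1; nra.
  - pose proof (sqrt_pos A). rewrite <- (sqrt_pow2 (sqrt A + d)) by lra.
    apply sqrt_le_1; [nra|nra|]. simpl. rewrite Rmult_1_r.
    assert (sqrt A * sqrt A = A) by (apply sqrt_sqrt; auto). nra.
Qed.

Lemma piece_bound (eps : R) (g : R -> pt) (a b : R) : a < b ->
  C1 (fun t => px (g t)) -> C1 (fun t => py (g t)) -> C1 (fun t => pz (g t)) ->
  ex_RInt (speed eps g) a b ->
  Rabs (enorm (g b) - enorm (g a)) <= RInt (speed eps g) a b.
Proof.
  intros Hab Cx Cy Cz Hsp.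
  set (I := RInt (speed eps g) a b).
  destruct (Rle_dec (Rabs (enorm (g b) - enorm (g a))) I) as [OK|NO]; auto.
  exfalso. set (d := (Rabs (enorm (g b) - enorm (g a)) - I) / 4).
  assert (Hd : 0 < d) by (unfold d; lra).
  pose proof (piece_delta eps g a b d Hab Hd Cx Cy Cz Hsp). fold I in H.
  pose proof (sqrt_close _ d (dot_ge0 (g b)) Hd).
  pose proof (sqrt_close _ d (dot_ge0 (g a)) Hd).
  unfold enorm in *. unfold d in *.
  revert H H0 H1 NO. generalize (sqrt (dot (g b) (g b))) (sqrt (dot (g a) (g a))).
  intros. unfold Rabs in *. repeat destruct Rcase_abs; lra.
Qed.

Lemma curve_lb eps c x y L : curve_length_is eps c x y L -> Rabs (enorm y - enorm x) <= L.
Proof.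
  intros (H0 & H1 & n & p & g & Hp0 & Hpn & Hinc & Hpc & HL).
  assert (forall k, (k <= n)%nat -> Rabs (enorm (c (p k)) - enorm x) <=
     psum (fun i => RInt (speed eps (g i)) (p i) (p (S i))) k).
  { induction k; intros Hk.
    - simpl. rewrite Hp0, H0. unfold Rminus; rewrite Rplus_opp_r, Rabs_R0; lra.
    - simpl. assert (Hk' : (k < n)%nat) by lia.
      specialize (IHk ltac:(lia)).
      destruct (Hpc k Hk') as [(Cx & Cy & Cz & Ag) Ei].
      pose proof (Hinc k Hk').
      pose proof (piece_bound eps (g k) (p k) (p (S k)) H Cx Cy Cz Ei).
      rewrite !Ag in H2 by lra.
      pose proof (Rabs_triang (enorm (c (p (S k))) - enorm (c (p k))) (enorm (c (p k)) - enorm x)).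
      replace (enorm (c (p (S k))) - enorm (c (p k)) + (enorm (c (p k)) - enorm x))
        with (enorm (c (p (S k))) - enorm x) in H3 by ring. lra. }
  specialize (H n (Nat.le_refl n)). rewrite Hpn, H1 in H. lra.
Qed.

Lemma glb_lower (E : R -> Prop) lb : (forall L, E L -> lb <= L) ->
  real (Glb_Rbar E) = 0 \/ lb <= real (Glb_Rbar E).
Proof.
  intros HE. pose proof (Glb_Rbar_correct E) as [Hl Hg].
  destruct (Glb_Rbar E) eqn:Eq; simpl; auto.
  right. specialize (Hg (Finite lb)). simpl in Hg. apply Hg.
  intros x Hx. simpl. apply HE; auto.
Qed.

Lemma glb_upper (E : R -> Prop) L : (forall L, E L -> 0 <= L) -> E L ->
  real (Glb_Rbar E) <= L.
Proof.
  intros HE HL. pose proof (Glb_Rbar_correct E) as [Hl Hg].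
  pose proof (Hl L HL).
  assert (Rbar_le (Finite 0) (Glb_Rbar E)) by (apply Hg; intros x Hx; simpl; apply HE; auto).
  destruct (Glb_Rbar E); simpl in *; auto; contradiction.
Qed.

Lemma len_nonneg eps x y L : (exists c, curve_length_is eps c x y L) -> 0 <= L.
Proof. intros [c Hc]. apply curve_lb in Hc. pose proof (Rabs_pos (enorm y - enorm x)). lra. Qed.

Lemma ldist_lower eps x y : ldist eps x y = 0 \/ Rabs (enorm y - enorm x) <= ldist eps x y.
Proof. apply glb_lower. intros L [c Hc]. eapply curve_lb; eauto. Qed.

Lemma ldist_upper eps x y c L : curve_length_is eps c x y L -> ldist eps x y <= L.
Proof. intros. apply glb_upper; [intros; eapply len_nonneg; eauto| exists c; auto]. Qed.

Lemma perp_unit (u1 u2 u3 : R) : exists e1 e2 e3,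
  e1*e1 + e2*e2 + e3*e3 = 1 /\ u1*e1 + u2*e2 + u3*e3 = 0.
Proof.
  destruct (Req_dec (u1*u1 + u2*u2) 0) as [Z|NZ].
  - assert (u1 = 0) by nra. assert (u2 = 0) by nra. subst.
    exists 1, 0, 0. split; ring.
  - assert (P : 0 < u1*u1 + u2*u2) by (pose proof (Rle_0_sqr u1); pose proof (Rle_0_sqr u2); unfold Rsqr in *; lra).
    set (s := sqrt (u1*u1 + u2*u2)).
    assert (Hs : 0 < s) by (apply sqrt_lt_R0; auto).
    assert (Hs2 : s * s = u1*u1 + u2*u2) by (apply sqrt_sqrt; lra).
    exists (- u2 / s), (u1 / s), 0. split.
    + apply Rmult_eq_reg_r with (s*s); [|nra]. field_simplify; [|lra]. unfold pow; rewrite !Rmult_1_r. nra.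
    + field. lra.
Qed.

Lemma sq3_zero a b c : a^2 + b^2 + c^2 = 0 -> a = 0 /\ b = 0 /\ c = 0.
Proof. intros. pose proof (pow2_ge_0 a). pose proof (pow2_ge_0 b). pose proof (pow2_ge_0 c).
  assert (a^2 = 0) by lra. assert (b^2 = 0) by lra. assert (c^2 = 0) by lra.
  repeat split; nra. Qed.

Lemma arc_exists (u1 u2 u3 w1 w2 w3 : R) :
  u1*u1 + u2*u2 + u3*u3 = 1 -> w1*w1 + w2*w2 + w3*w3 = 1 ->
  exists th e1 e2 e3, 0 <= th <= PI /\
    e1*e1 + e2*e2 + e3*e3 = 1 /\ u1*e1 + u2*e2 + u3*e3 = 0 /\
    cos th * u1 + sin th * e1 = w1 /\ cos th * u2 + sin th * e2 = w2 /\
    cos th * u3 + sin th * e3 = w3.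
Proof.
  intros Hu Hw. set (c := u1*w1 + u2*w2 + u3*w3).
  assert (CS : c * c <= 1).
  { unfold c. assert (0 <= (u1*w2-u2*w1)^2 + (u1*w3-u3*w1)^2 + (u2*w3-u3*w2)^2) by
      (repeat apply Rplus_le_le_0_compat; apply pow2_ge_0). nra. }
  assert (Cb : -1 <= c <= 1) by nra.
  destruct (Req_dec c 1) as [C1'|C1'].
  - destruct (perp_unit u1 u2 u3) as (e1 & e2 & e3 & He & Hue).
    assert (D : (w1-u1)^2 + (w2-u2)^2 + (w3-u3)^2 = 0) by (unfold c in C1'; nra).
    destruct (sq3_zero _ _ _ D) as (W1 & W2 & W3).
    assert (W1' : w1 = u1) by lra. assert (W2' : w2 = u2) by lra. assert (W3' : w3 = u3) by lra. clear W1 W2 W3. rename W1' into W1. rename W2' into W2. rename W3' into W3.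
    exists 0, e1, e2, e3. rewrite cos_0, sin_0, W1, W2, W3. pose proof PI_RGT_0.
    repeat split; try lra; try ring; auto.
  - destruct (Req_dec c (-1)) as [C2|C2].
    + destruct (perp_unit u1 u2 u3) as (e1 & e2 & e3 & He & Hue).
      assert (D : (w1+u1)^2 + (w2+u2)^2 + (w3+u3)^2 = 0) by (unfold c in C2; nra).
      destruct (sq3_zero _ _ _ D) as (W1 & W2 & W3).
      assert (W1' : w1 = -u1) by lra. assert (W2' : w2 = -u2) by lra. assert (W3' : w3 = -u3) by lra. clear W1 W2 W3. rename W1' into W1. rename W2' into W2. rename W3' into W3.
      exists PI, e1, e2, e3. rewrite cos_PI, sin_PI, W1, W2, W3. pose proof PI_RGT_0.
      repeat split; try lra; try ring; auto.
    + assert (Cs : -1 < c < 1) by lra.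
      set (s := sqrt (1 - c²)).
      assert (Hs : 0 < s) by (apply sqrt_lt_R0; unfold Rsqr; nra).
      assert (Hs2 : s * s = 1 - c * c) by (unfold s; rewrite sqrt_sqrt; unfold Rsqr; nra).
      exists (acos c), ((w1 - c*u1)/s), ((w2 - c*u2)/s), ((w3 - c*u3)/s).
      rewrite cos_acos, sin_acos by lra. fold s.
      split; [apply acos_bound|].
      split; [|split; [|repeat split; field; lra]].
      * apply Rmult_eq_reg_r with (s*s); [|nra].
        field_simplify; [|lra].
        transitivity (w1*w1+w2*w2+w3*w3 - 2*c*(u1*w1+u2*w2+u3*w3) + c^2*(u1*u1+u2*u2+u3*u3)); [ring|].
        rewrite Hu, Hw. change (u1*w1+u2*w2+u3*w3) with c. replace (s^2) with (s*s) by ring. rewrite Hs2. ring.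
      * apply Rmult_eq_reg_r with s; [|lra].
        transitivity ((u1*w1+u2*w2+u3*w3) - c*(u1*u1+u2*u2+u3*u3)); [field; lra|].
        rewrite Hu. change (u1*w1+u2*w2+u3*w3) with c. ring.
Qed.

Lemma C1_of (f f' : R -> R) : (forall t, is_derive f t (f' t)) -> (forall t, continuous f' t) -> C1 f.
Proof.
  intros D C t. split; [exists (f' t); auto|].
  apply continuous_ext with f'; [|auto]. intros s. symmetry. apply is_derive_unique. auto.
Qed.

Lemma cs_piece (f : R -> R) a b K : a < b -> (forall t, a < t < b -> f t = K) ->
  ex_RInt f a b /\ RInt f a b = (b - a) * K.
Proof.
  intros Hab H. split.
  - apply ex_RInt_ext with (fun _ => K); [|apply ex_RInt_const].
    rewrite Rmin_left, Rmax_right by lra. intros; symmetry; apply H; lra.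
  - rewrite RInt_ext with (g := fun _ => K).
    + rewrite RInt_const. reflexivity.
    + rewrite Rmin_left, Rmax_right by lra. intros; apply H; lra.
Qed.

Lemma radial_speed eps al be u1 u2 u3 t : u1*u1+u2*u2+u3*u3 = 1 -> 0 < al + be*t ->
  speed eps (fun s => ((al+be*s)*u1, (al+be*s)*u2, (al+be*s)*u3)) t = Rabs be.
Proof.
  intros Hu Hr. unfold speed, velocity, px, py, pz. simpl.
  replace (Derive (fun s : R => (al+be*s)*u1) t) with (be*u1) by (symmetry; apply is_derive_unique; auto_derive; auto; ring).
  replace (Derive (fun s : R => (al+be*s)*u2) t) with (be*u2) by (symmetry; apply is_derive_unique; auto_derive; auto; ring).
  replace (Derive (fun s : R => (al+be*s)*u3) t) with (be*u3) by (symmetry; apply is_derive_unique; auto_derive; auto; ring).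
  set (r := al + be*t) in *.
  unfold metric_sq.
  assert (En : enorm (r*u1, r*u2, r*u3) = r).
  { unfold enorm, dot, px, py, pz; simpl. transitivity (sqrt (r^2)); [|apply sqrt_pow2; lra]. f_equal.
    transitivity (r^2 * (u1*u1+u2*u2+u3*u3)); [ring|]. rewrite Hu; ring. }
  rewrite En. destruct (Req_EM_T r 0) as [Z|_]; [lra|].
  unfold dot, px, py, pz; cbn [fst snd].
  replace ((r * u1 * (be * u1) + r * u2 * (be * u2) + r * u3 * (be * u3)) / r) with be
    by (transitivity (be * (u1*u1+u2*u2+u3*u3)); [rewrite Hu; ring| field; lra]).
  replace (be * u1 * (be * u1) + be * u2 * (be * u2) + be * u3 * (be * u3)) with (be^2)
    by (transitivity (be^2 * (u1*u1+u2*u2+u3*u3)); [rewrite Hu; ring| ring]).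
  replace (be ^ 2 + (/ 2 * Rpower r (1 + eps) / r) ^ 2 * (be ^ 2 - be ^ 2)) with (Rabs be ^ 2)
    by (rewrite pow2_abs; ring).
  apply sqrt_pow2, Rabs_pos.
Qed.

Lemma arc_speed eps m al be u1 u2 u3 e1 e2 e3 t :
  u1*u1+u2*u2+u3*u3 = 1 -> e1*e1+e2*e2+e3*e3 = 1 -> u1*e1+u2*e2+u3*e3 = 0 -> 0 < m ->
  speed eps (fun s => (m*(cos (al+be*s)*u1 + sin (al+be*s)*e1),
                       m*(cos (al+be*s)*u2 + sin (al+be*s)*e2),
                       m*(cos (al+be*s)*u3 + sin (al+be*s)*e3))) t
  = / 2 * Rpower m (1 + eps) * Rabs be.
Proof.
  intros Hu He Hue Hm. unfold speed, velocity, px, py, pz. simpl.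
  set (ph := al + be * t).
  replace (Derive (fun s : R => m*(cos (al+be*s)*u1 + sin (al+be*s)*e1)) t) with (m*(- sin ph * be * u1 + cos ph * be * e1)) by (symmetry; apply is_derive_unique; auto_derive; auto; unfold ph; ring).
  replace (Derive (fun s : R => m*(cos (al+be*s)*u2 + sin (al+be*s)*e2)) t) with (m*(- sin ph * be * u2 + cos ph * be * e2)) by (symmetry; apply is_derive_unique; auto_derive; auto; unfold ph; ring).
  replace (Derive (fun s : R => m*(cos (al+be*s)*u3 + sin (al+be*s)*e3)) t) with (m*(- sin ph * be * u3 + cos ph * be * e3)) by (symmetry; apply is_derive_unique; auto_derive; auto; unfold ph; ring).
  fold ph. set (c := cos ph). set (s := sin ph).
  assert (Hcs : c*c + s*s = 1) by (unfold c, s; pose proof (sin2_cos2 ph); unfold Rsqr in *; lra).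
  unfold metric_sq.
  assert (En : enorm (m * (c * u1 + s * e1), m * (c * u2 + s * e2), m * (c * u3 + s * e3)) = m).
  { unfold enorm, dot, px, py, pz; simpl. transitivity (sqrt (m^2)); [|apply sqrt_pow2; lra]. f_equal.
    transitivity (m^2 * (c*c*(u1*u1+u2*u2+u3*u3) + 2*c*s*(u1*e1+u2*e2+u3*e3) + s*s*(e1*e1+e2*e2+e3*e3))); [ring|].
    rewrite Hu, He, Hue. transitivity (m^2*(c*c+s*s)); [ring|]. rewrite Hcs; ring. }
  rewrite En. destruct (Req_EM_T m 0) as [Z|_]; [lra|].
  unfold dot, px, py, pz; cbn [fst snd].
  set (A := Rpower m (1 + eps)).
  assert (HA : 0 < A) by (unfold A, Rpower; apply exp_pos).
  match goal with |- sqrt ((?X / m) ^ 2 + ?K * (?Y - (?X / m) ^ 2)) = _ =>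
    assert (EX : X = 0); [|assert (EY : Y = m^2 * be^2)] end.
  { transitivity (m*m*be*(c*s*(- (u1*u1+u2*u2+u3*u3) + (e1*e1+e2*e2+e3*e3)) + (c*c - s*s)*(u1*e1+u2*e2+u3*e3))); [ring|].
    rewrite Hu, He, Hue. ring. }
  { transitivity (m^2 * be^2 * (s*s*(u1*u1+u2*u2+u3*u3) - 2*c*s*(u1*e1+u2*e2+u3*e3) + c*c*(e1*e1+e2*e2+e3*e3))); [ring|].
    rewrite Hu, He, Hue. transitivity (m^2*be^2*(c*c+s*s)); [ring|]. rewrite Hcs; ring. }
  rewrite EX, EY.
  replace ((0 / m) ^ 2 + (/ 2 * A / m) ^ 2 * (m ^ 2 * be ^ 2 - (0 / m) ^ 2)) with ((/2 * A * Rabs be)^2)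
    by (rewrite <- (pow2_abs be); field; lra).
  apply sqrt_pow2. pose proof (Rabs_pos be). nra.
Qed.

Ltac c1tac D := apply (C1_of _ D);
  [intro; unfold px, py, pz; cbn [fst snd]; auto_derive; [auto| ring]
  | intro; try apply continuous_const; apply (@ex_derive_continuous R_AbsRing R_NormedModule); auto_derive; auto].

Lemma Rpower_small m eps : 0 < m < 1 -> 0 < eps -> Rpower m (1 + eps) < m.
Proof.
  intros Hm He. rewrite Rpower_plus, Rpower_1 by lra.
  assert (Rpower m eps < 1).
  { unfold Rpower. rewrite <- exp_0. apply exp_increasing.
    assert (ln m < 0) by (rewrite <- ln_1; apply ln_increasing; lra). nra. }
  nra.
Qed.

Lemma short_curve eps (x y : pt) : 0 < eps -> 0 < enorm x < 1 -> 0 < enorm y < 1 ->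
  exists c L, curve_length_is eps c x y L /\ L < enorm x + enorm y.
Proof.
  intros Heps Hx Hy.
  destruct x as ((x1, x2), x3). destruct y as ((y1, y2), y3).
  set (rx := enorm (x1, x2, x3)) in *. set (ry := enorm (y1, y2, y3)) in *.
  assert (Erx : rx * rx = x1*x1 + x2*x2 + x3*x3) by (unfold rx, enorm; rewrite sqrt_sqrt; [reflexivity| apply (dot_ge0 (x1,x2,x3))]).
  assert (Ery : ry * ry = y1*y1 + y2*y2 + y3*y3) by (unfold ry, enorm; rewrite sqrt_sqrt; [reflexivity| apply (dot_ge0 (y1,y2,y3))]).
  set (m := Rmin rx ry).
  assert (Hm1 : m <= rx) by apply Rmin_l. assert (Hm2 : m <= ry) by apply Rmin_r.
  assert (Hm0 : 0 < m) by (unfold m; apply Rmin_glb_lt; lra).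
  set (u1 := x1 / rx). set (u2 := x2 / rx). set (u3 := x3 / rx).
  set (w1 := y1 / ry). set (w2 := y2 / ry). set (w3 := y3 / ry).
  assert (Hu : u1*u1+u2*u2+u3*u3 = 1).
  { unfold u1, u2, u3. transitivity ((x1*x1+x2*x2+x3*x3)/(rx*rx)); [field; lra|]. rewrite <- Erx. field. lra. }
  assert (Hw : w1*w1+w2*w2+w3*w3 = 1).
  { unfold w1, w2, w3. transitivity ((y1*y1+y2*y2+y3*y3)/(ry*ry)); [field; lra|]. rewrite <- Ery. field. lra. }
  destruct (arc_exists u1 u2 u3 w1 w2 w3 Hu Hw) as (th & e1 & e2 & e3 & Hth & He & Hue & A1 & A2 & A3).
  set (g0 := fun s => ((rx + 3*(m-rx)*s)*u1, (rx + 3*(m-rx)*s)*u2, (rx + 3*(m-rx)*s)*u3)).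
  set (g1 := fun s => (m*(cos (-th + 3*th*s)*u1 + sin (-th + 3*th*s)*e1),
                       m*(cos (-th + 3*th*s)*u2 + sin (-th + 3*th*s)*e2),
                       m*(cos (-th + 3*th*s)*u3 + sin (-th + 3*th*s)*e3))).
  set (g2 := fun s => ((3*m - 2*ry + 3*(ry-m)*s)*w1, (3*m - 2*ry + 3*(ry-m)*s)*w2, (3*m - 2*ry + 3*(ry-m)*s)*w3)).
  set (c := fun s => if Rle_dec s (1/3) then g0 s else if Rle_dec s (2/3) then g1 s else g2 s).
  set (G := fun i : nat => match i with 0%nat => g0 | 1%nat => g1 | _ => g2 end).
  set (p := fun i : nat => INR i / 3).
  assert (S0 : forall t, 0 < t < 1/3 -> speed eps g0 t = Rabs (3*(m-rx))).
  { intros t Ht. unfold g0. apply radial_speed; auto. nra. }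
  assert (S1 : forall t, speed eps g1 t = / 2 * Rpower m (1 + eps) * Rabs (3*th)).
  { intros t. unfold g1. apply arc_speed; auto. }
  assert (S2 : forall t, 2/3 < t < 1 -> speed eps g2 t = Rabs (3*(ry-m))).
  { intros t Ht. unfold g2. apply radial_speed; auto. nra. }
  destruct (cs_piece (speed eps g0) 0 (1/3) _ ltac:(lra) S0) as [I0 R0].
  destruct (cs_piece (speed eps g1) (1/3) (2/3) _ ltac:(lra) (fun t _ => S1 t)) as [I1 R1].
  destruct (cs_piece (speed eps g2) (2/3) 1 _ ltac:(lra) S2) as [I2 R2].
  exists c, (psum (fun i => RInt (speed eps (G i)) (p i) (p (S i))) 3).
  split.
  - split; [|split].
    + unfold c. destruct (Rle_dec 0 (1/3)); [|lra]. unfold g0, u1, u2, u3.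
      f_equal; [f_equal|]; field; lra.
    + unfold c. destruct (Rle_dec 1 (1/3)); [lra|]. destruct (Rle_dec 1 (2/3)); [lra|].
      unfold g2, w1, w2, w3. f_equal; [f_equal|]; field; lra.
    + exists 3%nat, p, G. split; [unfold p; simpl; lra|]. split; [unfold p; simpl; lra|].
      split; [intros i Hi; unfold p; rewrite S_INR; lra|]. split; [|reflexivity].
      intros i Hi. destruct i as [|[|[|i]]]; [| | |lia]; unfold p, G; simpl INR.
      * replace (0/3) with 0 by field. replace (1/3) with (1/3) by reflexivity.
        split; [|exact I0]. unfold C1_piece, g0. split; [c1tac (fun _ : R => 3*(m-rx)*u1)|].
        split; [c1tac (fun _ : R => 3*(m-rx)*u2)|]. split; [c1tac (fun _ : R => 3*(m-rx)*u3)|].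
        intros t Ht. unfold c. destruct (Rle_dec t (1/3)); [reflexivity|lra].
      * replace ((1+1)/3) with (2/3) by field.
        split; [|exact I1]. unfold C1_piece, g1. split; [c1tac (fun s : R => m*(- sin (-th+3*th*s) * (3*th) * u1 + cos (-th+3*th*s) * (3*th) * e1))|].
        split; [c1tac (fun s : R => m*(- sin (-th+3*th*s) * (3*th) * u2 + cos (-th+3*th*s) * (3*th) * e2))|].
        split; [c1tac (fun s : R => m*(- sin (-th+3*th*s) * (3*th) * u3 + cos (-th+3*th*s) * (3*th) * e3))|].
        intros t Ht. unfold c. destruct (Rle_dec t (1/3)).
        -- assert (t = 1/3) by lra. subst t. unfold g0, g1.
           replace (-th + 3*th*(1/3)) with 0 by field. rewrite cos_0, sin_0.
           f_equal; [f_equal|]; field.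
        -- destruct (Rle_dec t (2/3)); [reflexivity|lra].
      * replace ((1+1)/3) with (2/3) by field. replace ((1+1+1)/3) with 1 by field.
        split; [|exact I2]. unfold C1_piece, g2. split; [c1tac (fun _ : R => 3*(ry-m)*w1)|].
        split; [c1tac (fun _ : R => 3*(ry-m)*w2)|]. split; [c1tac (fun _ : R => 3*(ry-m)*w3)|].
        intros t Ht. unfold c. destruct (Rle_dec t (1/3)); [lra|].
        destruct (Rle_dec t (2/3)).
        -- assert (t = 2/3) by lra. subst t. unfold g1, g2.
           replace (-th + 3*th*(2/3)) with th by field. rewrite <- A1, <- A2, <- A3.
           f_equal; [f_equal|]; field.
        -- reflexivity.
  - simpl. unfold G, p. simpl INR.
    replace (0/3) with 0 by field. replace ((1+1)/3) with (2/3) by field. replace ((1+1+1)/3) with 1 by field.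
    rewrite R0, R1, R2.
    rewrite (Rabs_left1 (3*(m-rx))) by lra. rewrite (Rabs_pos_eq (3*(ry-m))) by lra.
    rewrite (Rabs_pos_eq (3*th)) by lra.
    assert (HA := Rpower_small m eps ltac:(split; lra) Heps).
    assert (HA0 : 0 < Rpower m (1+eps)) by (unfold Rpower; apply exp_pos).
    pose proof PI_4. pose proof PI_RGT_0.
    assert (Rpower m (1+eps) * th <= m * PI) by nra.
    nra.
Qed.

Lemma ldist_refl eps (q : pt) : ldist eps q q <= 0.
Proof.
  destruct q as ((q1, q2), q3).
  assert (Sp : forall t, speed eps (fun _ => (q1, q2, q3)) t = 0).
  { intros t. unfold speed, velocity, px, py, pz. cbn [fst snd]. rewrite !Derive_const.
    unfold metric_sq. destruct Req_EM_T; [apply sqrt_0|].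
    unfold dot, px, py, pz; cbn [fst snd].
    replace ((q1 * 0 + q2 * 0 + q3 * 0) / enorm (q1, q2, q3)) with 0 by (field; auto).
    replace (0 * 0 + 0 * 0 + 0 * 0) with 0 by ring. transitivity (sqrt 0); [f_equal; ring| apply sqrt_0]. }
  destruct (cs_piece (speed eps (fun _ => (q1, q2, q3))) 0 1 0 ltac:(lra) (fun t _ => Sp t)) as [I0 R0].
  apply ldist_upper with (c := fun _ => (q1, q2, q3)).
  split; [reflexivity|]. split; [reflexivity|].
  exists 1%nat, INR, (fun _ _ => (q1, q2, q3)). split; [reflexivity|]. split; [reflexivity|].
  split; [intros i Hi; rewrite S_INR; lra|]. split.
  - intros i Hi. assert (i = 0%nat) by lia. subst i. simpl INR. split; [|exact I0].
    unfold C1_piece. split; [c1tac (fun _ : R => 0)|]. split; [c1tac (fun _ : R => 0)|].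
    split; [c1tac (fun _ : R => 0)|]. auto.
  - simpl. simpl INR in R0. rewrite R0. ring.
Qed.

Lemma enorm_origin : enorm origin = 0.
Proof. unfold enorm, dot, origin, px, py, pz; cbn [fst snd]. transitivity (sqrt 0); [f_equal; ring| apply sqrt_0]. Qed.

Lemma enorm_zero (q : pt) : enorm q = 0 -> q = origin.
Proof.
  destruct q as ((q1, q2), q3). intros H. unfold enorm in H.
  assert (E : dot (q1,q2,q3) (q1,q2,q3) = 0) by (apply sqrt_eq_0; [apply dot_ge0|auto]).
  unfold dot, px, py, pz in E; cbn [fst snd] in E.
  destruct (sq3_zero q1 q2 q3) as (A & B & C); [lra|]. subst. reflexivity.
Qed.

Theorem lemma7p2 (eps : R) (heps : 0 < eps) :
  exists eta : R, 0 < eta /\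
    forall x y : pt, enorm x < eta -> enorm y < eta ->
    forall gam : R -> pt, geodesic eps x y gam ->
      ~ (exists t : R, 0 < t < ldist eps x y /\ gam t = origin).
Proof.
  exists 1. split; [lra|]. intros x y Hx Hy gam (G0 & GD & Giso) [t [Ht Gt]].
  set (D := ldist eps x y) in *.
  assert (Hxo : ldist eps x origin = t).
  { rewrite <- G0, <- Gt, Giso by lra. rewrite Rabs_left; lra. }
  assert (Hoy : ldist eps origin y = D - t).
  { rewrite <- GD, <- Gt, Giso by lra. rewrite Rabs_left; lra. }
  assert (Lx : enorm x <= t).
  { destruct (ldist_lower eps x origin) as [Z|L]; [lra|]. rewrite enorm_origin, Hxo in L.
    rewrite Rabs_minus_sym, Rminus_0_r in L. pose proof (Rle_abs (enorm x)). lra. }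
  assert (Ly : enorm y <= D - t).
  { destruct (ldist_lower eps origin y) as [Z|L]; [lra|]. rewrite enorm_origin, Hoy in L.
    rewrite Rminus_0_r in L. pose proof (Rle_abs (enorm y)). lra. }
  assert (Px : 0 < enorm x).
  { destruct (Req_dec (enorm x) 0) as [Z|NZ]; [|pose proof (sqrt_pos (dot x x)); unfold enorm in *; lra].
    apply enorm_zero in Z. rewrite Z in Hxo. pose proof (ldist_refl eps origin). lra. }
  assert (Py : 0 < enorm y).
  { destruct (Req_dec (enorm y) 0) as [Z|NZ]; [|pose proof (sqrt_pos (dot y y)); unfold enorm in *; lra].
    apply enorm_zero in Z. rewrite Z in Hoy. pose proof (ldist_refl eps origin). lra. }
  destruct (short_curve eps x y heps ltac:(lra) ltac:(lra)) as (c & L & Hc & HL).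
  pose proof (ldist_upper eps x y c L Hc). fold D in H. lra.
Qed.
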